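(* The $b$-coupled spin-oscillator $(M,Z,\omega,F=(L,H))$ is a $b$-integrable system; in particular $\{L,H\}=0$ on all of $M$.
   Context: Fix constants $\rho_1,\rho_2>0$. Let $M=S^2\times\mathbb R^2$, where $S^2\subset\mathbb R^3$ is the unit sphere with coordinates $(x,y,z)$, $x^2+y^2+z^2=1$, and $(u,v)$ are coordinates on $\mathbb R^2$; let $Z=\{z=0\}\times\mathbb R^2$. On $\{|z|<1\}$ use cylindrical coordinates $(\theta,z)$ with $\theta=\arg(x+iy)$; on $\{z\neq0\}$ use $(x,y)$ as coordinates on each open hemisphere. The $b$-symplectic form is $\omega=-\rho_1\,\omega^b_{S^2}+\rho_2\,du\wedge dv$, where $\omega^b_{S^2}=d\theta\wedge\frac{dz}{z}$ on $\{|z|<1\}$ and $\omega^b_{S^2}=\frac{1}{1-x^2-y^2}dx\wedge dy$ on $\{z\ne0\}$. The $b$-coupled spin-oscillator is $F=(L,H)$ with $L=\rho_1\log|z|+\frac{\rho_2}{2}(u^2+v^2)$ and $H=\frac12(xu+yv)$. A $b$-integrable system on a $2n$-dimensional $b$-symplectic manifold $(M,Z,\omega)$ (a manifold with a hypersurface $Z$ and a closed nondegenerate 2-form in the $b$-cotangent bundle, i.e. allowing $\frac{dz}{z}$ terms for a defining function $z$ of $Z$) is an $n$-tuple of $b$-functions (functions locally of the form $c\log|z|+g$, $c\in\mathbb R$, $g$ smooth) that pairwise Poisson-commute for the bracket induced by $\omega$ and whose wedge of differentials, as a $b$-form, is nonzero almost everywhere on $M$ and almost everywhere on $Z$. *)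

(* Defs.v *)
From Stdlib Require Import Reals List.
From Coquelicot Require Import Coquelicot.
Open Scope R_scope.

(* Functions on M, given in ambient coordinates (x,y,z,u,v). *)
Definition fnM := R -> R -> R -> R -> R -> R.
Definition fn4 := R -> R -> R -> R -> R.
Definition set4 := R -> R -> R -> R -> Prop.
Definition set3 := R -> R -> R -> Prop.

Inductive dir4 := d1 | d2 | d3 | d4.

Definition pd (i : dir4) (f : fn4) : fn4 := fun a b c d =>
  match i with
  | d1 => Derive (fun s => f s b c d) a
  | d2 => Derive (fun s => f a s c d) b
  | d3 => Derive (fun s => f a b s d) c
  | d4 => Derive (fun s => f a b c s) d
  end.

Definition ex_pd (i : dir4) (f : fn4) (a b c d : R) : Prop :=
  match i with
  | d1 => ex_derive (fun s => f s b c d) a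
  | d2 => ex_derive (fun s => f a s c d) b
  | d3 => ex_derive (fun s => f a b s d) c
  | d4 => ex_derive (fun s => f a b c s) d
  end.

Fixpoint iter_pd (l : list dir4) (f : fn4) : fn4 :=
  match l with nil => f | i :: l' => pd i (iter_pd l' f) end.

Definition cont4_at (f : fn4) (a b c d : R) : Prop :=
  forall eps, 0 < eps -> exists del, 0 < del /\
    forall a' b' c' d', Rabs (a' - a) < del -> Rabs (b' - b) < del ->
      Rabs (c' - c) < del -> Rabs (d' - d) < del ->
      Rabs (f a' b' c' d' - f a b c d) < eps.

(* C^infinity on U: all iterated partial derivatives of all orders exist
   and are continuous at every point of U (U will always be open). *)
Definition smooth_on (U : set4) (f : fn4) : Prop :=
  forall (l : list dir4) a b c d, U a b c d ->
    cont4_at (iter_pd l f) a b c d /\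
    forall i, ex_pd i (iter_pd l f) a b c d.

Definition null4 (S : set4) : Prop :=
  forall eps, 0 < eps -> exists l1 h1 l2 h2 l3 h3 l4 h4 : nat -> R,
    (forall n, l1 n <= h1 n /\ l2 n <= h2 n /\ l3 n <= h3 n /\ l4 n <= h4 n) /\
    (forall N, sum_f_R0 (fun n => (h1 n - l1 n) * (h2 n - l2 n)
                                 * (h3 n - l3 n) * (h4 n - l4 n)) N <= eps) /\
    (forall a b c d, S a b c d -> exists n,
        l1 n <= a <= h1 n /\ l2 n <= b <= h2 n /\
        l3 n <= c <= h3 n /\ l4 n <= d <= h4 n).

Definition null3 (S : set3) : Prop :=
  forall eps, 0 < eps -> exists l1 h1 l2 h2 l3 h3 : nat -> R,
    (forall n, l1 n <= h1 n /\ l2 n <= h2 n /\ l3 n <= h3 n) /\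
    (forall N, sum_f_R0 (fun n => (h1 n - l1 n) * (h2 n - l2 n)
                                 * (h3 n - l3 n)) N <= eps) /\
    (forall a b c, S a b c -> exists n,
        l1 n <= a <= h1 n /\ l2 n <= b <= h2 n /\ l3 n <= c <= h3 n).

(* Hemisphere charts (s = 1: z > 0, s = -1: z < 0), coordinates (x,y,u,v)
   with x^2+y^2 < 1; they cover M \ Z. *)
Definition hemi_dom : set4 := fun a b _ _ => a ^ 2 + b ^ 2 < 1.
Definition hemi (s : R) (f : fnM) : fn4 :=
  fun a b u v => f a b (s * sqrt (1 - a ^ 2 - b ^ 2)) u v.

(* Cylindrical chart on {|z| < 1}: coordinates (theta, z, u, v),
   x = sqrt(1-z^2) cos theta, y = sqrt(1-z^2) sin theta; it contains Z = {z = 0}. *)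
Definition cyl_dom : set4 := fun _ t _ _ => Rabs t < 1.
Definition cyl (f : fnM) : fn4 :=
  fun th t u v => f (sqrt (1 - t ^ 2) * cos th) (sqrt (1 - t ^ 2) * sin th) t u v.

Definition box4 (a b c d r : R) : set4 := fun a' b' c' d' =>
  Rabs (a' - a) < r /\ Rabs (b' - b) < r /\ Rabs (c' - c) < r /\ Rabs (d' - d) < r.

Definition is_bfun (f : fnM) : Prop :=
  (forall s, (s = 1 \/ s = -1) -> smooth_on hemi_dom (hemi s f)) /\
  (forall th t u v, cyl_dom th t u v -> exists r, 0 < r /\ exists (c : R) (g : fn4),
     smooth_on (fun a b c' d => box4 th t u v r a b c' d /\ cyl_dom a b c' d) g /\
     forall a b c' d, box4 th t u v r a b c' d -> cyl_dom a b c' d -> b <> 0 ->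
       cyl f a b c' d = c * ln (Rabs b) + g a b c' d).

(* Components of the b-differential of a function in a chart.
   Hemisphere chart: basis (dx, dy, du, dv).
   Cylindrical chart: b-basis (dtheta, dz/z, du, dv); the dz/z-component is
   (the continuous extension of) z * d/dz. *)
Definition hcomp (F : fn4) (a b u v : R) : dir4 -> R := fun i => pd i F a b u v.
Definition bpd_z (F : fn4) (th t u v : R) : R :=
  real (Lim (fun s => s * Derive (fun r => F th r u v) s) t).
Definition ccomp (F : fn4) (th t u v : R) : dir4 -> R := fun i =>
  match i with d2 => bpd_z F th t u v | _ => pd i F th t u v end.

(* Poisson bracket induced by a (b-)symplectic form
   omega = c1 e1/\e2 + c2 e3/\e4 (e_i the chart (b-)coframe):
   {f,g} = c1^{-1}(f_1 g_2 - f_2 g_1) + c2^{-1}(f_3 g_4 - f_4 g_3). *)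
Definition br (c1 c2 : R) (al be : dir4 -> R) : R :=
  / c1 * (al d1 * be d2 - al d2 * be d1) + / c2 * (al d3 * be d4 - al d4 * be d3).

(* coefficients of omega = -rho1 omega^b_{S^2} + rho2 du/\dv in the charts *)
Definition omega_hem (rho1 a b : R) : R := - rho1 / (1 - a ^ 2 - b ^ 2).
Definition omega_cyl (rho1 : R) : R := - rho1.

Definition wedge_zero (al be : dir4 -> R) : Prop :=
  forall i j, al i * be j - al j * be i = 0.

Definition b_integrable (rho1 rho2 : R) (F1 F2 : fnM) : Prop :=
  is_bfun F1 /\ is_bfun F2 /\
  (* {F1,F2} = 0 on all of M (charts cover M) *)
  (forall s, (s = 1 \/ s = -1) -> forall a b u v, hemi_dom a b u v ->
     br (omega_hem rho1 a b) rho2 (hcomp (hemi s F1) a b u v)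
        (hcomp (hemi s F2) a b u v) = 0) /\
  (forall th t u v, cyl_dom th t u v ->
     br (omega_cyl rho1) rho2 (ccomp (cyl F1) th t u v)
        (ccomp (cyl F2) th t u v) = 0) /\
  (* dF1 /\ dF2 <> 0 almost everywhere on M (null in every chart) *)
  (forall s, (s = 1 \/ s = -1) -> null4 (fun a b u v => hemi_dom a b u v /\
     wedge_zero (hcomp (hemi s F1) a b u v) (hcomp (hemi s F2) a b u v))) /\
  null4 (fun th t u v => cyl_dom th t u v /\
     wedge_zero (ccomp (cyl F1) th t u v) (ccomp (cyl F2) th t u v)) /\
  (* ... and almost everywhere on Z = {z = 0}, coordinates (theta,u,v) *)
  null3 (fun th u v =>
     wedge_zero (ccomp (cyl F1) th 0 u v) (ccomp (cyl F2) th 0 u v)).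

Definition Lso (rho1 rho2 : R) : fnM := fun x y z u v =>
  rho1 * ln (Rabs z) + rho2 / 2 * (u ^ 2 + v ^ 2).
Definition Hso : fnM := fun x y z u v => / 2 * (x * u + y * v).

(* Main.v *)
Require Import Defs.
From Stdlib Require Import Reals.
From Coquelicot Require Import Coquelicot.
Open Scope R_scope.
From Stdlib Require Import Lra Psatz.
Import Defs.


Inductive ex := V (i : dir4) | C (c : R) | Add (u w : ex) | Mul (u w : ex)
 | Ln (u : ex) | Sq (u : ex) | Inv (u : ex) | Cs (u : ex) | Sn (u : ex).

Fixpoint ev (e : ex) : fn4 :=
  match e with
  | V i => fun a b c d => match i with d1 => a | d2 => b | d3 => c | d4 => d end
  | C k => fun _ _ _ _ => k
  | Add u w => fun a b c d => ev u a b c d + ev w a b c d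
  | Mul u w => fun a b c d => ev u a b c d * ev w a b c d
  | Ln u => fun a b c d => ln (ev u a b c d)
  | Sq u => fun a b c d => sqrt (ev u a b c d)
  | Inv u => fun a b c d => / (ev u a b c d)
  | Cs u => fun a b c d => cos (ev u a b c d)
  | Sn u => fun a b c d => sin (ev u a b c d)
  end.

Fixpoint dm (e : ex) (a b c d : R) : Prop :=
  match e with
  | V _ | C _ => True
  | Add u w | Mul u w => dm u a b c d /\ dm w a b c d
  | Ln u | Sq u => dm u a b c d /\ 0 < ev u a b c d
  | Inv u => dm u a b c d /\ ev u a b c d <> 0
  | Cs u | Sn u => dm u a b c d
  end.

Definition deq (i j : dir4) : bool :=
  match i, j with d1, d1 | d2, d2 | d3, d3 | d4, d4 => true | _, _ => false end.

Fixpoint dv (i : dir4) (e : ex) : ex :=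
  match e with
  | V j => C (if deq i j then 1 else 0)
  | C _ => C 0
  | Add u w => Add (dv i u) (dv i w)
  | Mul u w => Add (Mul (dv i u) w) (Mul u (dv i w))
  | Ln u => Mul (dv i u) (Inv u)
  | Sq u => Mul (dv i u) (Inv (Mul (C 2) (Sq u)))
  | Inv u => Mul (C (-1)) (Mul (dv i u) (Inv (Mul u u)))
  | Cs u => Mul (C (-1)) (Mul (dv i u) (Sn u))
  | Sn u => Mul (dv i u) (Cs u)
  end.

Lemma dm_dv i e a b c d : dm e a b c d -> dm (dv i e) a b c d.
Proof.
  induction e; simpl; intuition; try lra;
  try (apply Rmult_integral in H; tauto);
  try (match goal with H : 2 * sqrt _ = 0 |- _ => apply Rmult_integral in H; destruct H as [H|H]; [lra|] end;
       match goal with H : sqrt ?x = 0, H' : 0 < ?x |- _ => apply sqrt_lt_R0 in H'; lra end);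
  try (apply Rmult_integral in H2; tauto).
Qed.

Definition line (i : dir4) (f : fn4) (a b c d : R) : R -> R :=
  match i with
  | d1 => fun s => f s b c d | d2 => fun s => f a s c d
  | d3 => fun s => f a b s d | d4 => fun s => f a b c s end.
Definition coord (i : dir4) (a b c d : R) : R :=
  match i with d1 => a | d2 => b | d3 => c | d4 => d end.

Lemma pd_line i f a b c d : pd i f a b c d = Derive (line i f a b c d) (coord i a b c d).
Proof. destruct i; reflexivity. Qed.
Lemma ex_pd_line i f a b c d : ex_pd i f a b c d = ex_derive (line i f a b c d) (coord i a b c d).
Proof. destruct i; reflexivity. Qed.
Lemma line_coord i f a b c d : line i f a b c d (coord i a b c d) = f a b c d.
Proof. destruct i; reflexivity. Qed.

Lemma is_derive_eq (f : R -> R) x l l' : is_derive f x l -> l = l' -> is_derive f x l'.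
Proof. intros H ->; exact H. Qed.

Lemma plusR (x y : R) : plus x y = x + y. Proof. reflexivity. Qed.
Lemma multR (x y : R) : mult x y = x * y. Proof. reflexivity. Qed.
Lemma scalR (x y : R) : scal x y = x * y. Proof. reflexivity. Qed.

Lemma ev_is_derive i e a b c d : dm e a b c d ->
  is_derive (line i (ev e) a b c d) (coord i a b c d) (ev (dv i e) a b c d).
Proof.
  induction e; simpl dm; intros Hd.
  - destruct i, i0; simpl; (eapply is_derive_eq;
    [match goal with
     | |- is_derive (fun s => s) _ _ => apply (is_derive_id (K:=R_AbsRing))
     | _ => apply (is_derive_const (K:=R_AbsRing) (V:=R_NormedModule)) end| reflexivity]).
  - destruct i; simpl; (eapply is_derive_eq; [apply (is_derive_const (K:=R_AbsRing) (V:=R_NormedModule)) | reflexivity]).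
  - destruct Hd as [H1 H2].
    assert (E : line i (ev (Add e1 e2)) a b c d = fun s => plus (line i (ev e1) a b c d s) (line i (ev e2) a b c d s)) by (destruct i; reflexivity).
    rewrite E. eapply is_derive_eq.
    apply (is_derive_plus (K:=R_AbsRing) (V:=R_NormedModule) (line i (ev e1) a b c d) (line i (ev e2) a b c d)); auto.
    rewrite plusR. simpl. reflexivity.
  - destruct Hd as [H1 H2].
    assert (E : line i (ev (Mul e1 e2)) a b c d = fun s => mult (line i (ev e1) a b c d s) (line i (ev e2) a b c d s)) by (destruct i; reflexivity).
    rewrite E. eapply is_derive_eq.
    apply (is_derive_mult (K:=R_AbsRing) (line i (ev e1) a b c d) (line i (ev e2) a b c d)); auto.
    intros; apply Rmult_comm.
    rewrite plusR, !multR, !line_coord. simpl. reflexivity.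
  - destruct Hd as [H1 H2].
    assert (E : line i (ev (Ln e)) a b c d = fun s => ln (line i (ev e) a b c d s)) by (destruct i; reflexivity).
    rewrite E. eapply is_derive_eq.
    apply (is_derive_comp (K:=R_AbsRing) (V:=R_NormedModule) ln (line i (ev e) a b c d)); [|apply IHe; auto].
    apply is_derive_ln. rewrite line_coord; auto.
    rewrite scalR, line_coord. simpl. reflexivity.
  - destruct Hd as [H1 H2].
    assert (E : line i (ev (Sq e)) a b c d = fun s => sqrt (line i (ev e) a b c d s)) by (destruct i; reflexivity).
    rewrite E. eapply is_derive_eq. apply (is_derive_sqrt (line i (ev e) a b c d)); [apply IHe; auto|].
    rewrite line_coord; auto.
    rewrite line_coord. simpl. reflexivity.
  - destruct Hd as [H1 H2].
    assert (E : line i (ev (Inv e)) a b c d = fun s => / (line i (ev e) a b c d s)) by (destruct i; reflexivity).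
    rewrite E. eapply is_derive_eq. apply (is_derive_inv (line i (ev e) a b c d)); [apply IHe; auto|].
    rewrite line_coord; auto.
    rewrite line_coord. simpl. field. auto.
  - assert (E : line i (ev (Cs e)) a b c d = fun s => cos (line i (ev e) a b c d s)) by (destruct i; reflexivity).
    rewrite E. eapply is_derive_eq.
    apply (is_derive_comp (K:=R_AbsRing) (V:=R_NormedModule) cos (line i (ev e) a b c d)); [|apply IHe; auto].
    apply is_derive_cos.
    rewrite scalR, line_coord. simpl. ring.
  - assert (E : line i (ev (Sn e)) a b c d = fun s => sin (line i (ev e) a b c d s)) by (destruct i; reflexivity).
    rewrite E. eapply is_derive_eq.
    apply (is_derive_comp (K:=R_AbsRing) (V:=R_NormedModule) sin (line i (ev e) a b c d)); [|apply IHe; auto].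
    apply is_derive_sin.
    rewrite scalR, line_coord. simpl. ring.
Qed.


Lemma ball_R (x e y : R) : ball x e y <-> Rabs (y - x) < e.
Proof. reflexivity. Qed.

Lemma cont1_eps (g : R -> R) x : continuous g x ->
  forall eps, 0 < eps -> exists del, 0 < del /\ forall y, Rabs (y - x) < del -> Rabs (g y - g x) < eps.
Proof.
  intros H eps He.
  destruct (proj1 (filterlim_locally g (g x)) H (mkposreal eps He)) as [del Hd].
  exists del. split; [apply cond_pos|]. intros y Hy. apply Hd. exact Hy.
Qed.

Lemma cont4_comp1 (g : R -> R) (f : fn4) a b c d :
  continuous g (f a b c d) -> cont4_at f a b c d ->
  cont4_at (fun a b c d => g (f a b c d)) a b c d.
Proof.
  intros Hg Hf eps He.
  destruct (cont1_eps g _ Hg eps He) as [d1' [Hd1 H1]].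
  destruct (Hf d1' Hd1) as [del [Hdel H2]].
  exists del; split; [exact Hdel|]. intros. apply H1. auto.
Qed.

Lemma cont4_comp2 (h : R -> R -> R) (f g : fn4) a b c d :
  (forall eps, 0 < eps -> exists del, 0 < del /\ forall x y, Rabs (x - f a b c d) < del ->
      Rabs (y - g a b c d) < del -> Rabs (h x y - h (f a b c d) (g a b c d)) < eps) ->
  cont4_at f a b c d -> cont4_at g a b c d ->
  cont4_at (fun a b c d => h (f a b c d) (g a b c d)) a b c d.
Proof.
  intros Hh Hf Hg eps He.
  destruct (Hh eps He) as [d0 [Hd0 H0]].
  destruct (Hf d0 Hd0) as [e1 [He1 H1]].
  destruct (Hg d0 Hd0) as [e2 [He2 H2]].
  exists (Rmin e1 e2); split. apply Rmin_pos; auto.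
  intros. apply H0; [apply H1|apply H2]; eapply Rlt_le_trans; eauto;
    first [apply Rmin_l | apply Rmin_r].
Qed.

Lemma plus_cont2 x0 y0 : forall eps, 0 < eps -> exists del, 0 < del /\ forall x y,
  Rabs (x - x0) < del -> Rabs (y - y0) < del -> Rabs (x + y - (x0 + y0)) < eps.
Proof.
  intros eps He. exists (eps/2); split; [lra|]. intros x y H1 H2.
  replace (x + y - (x0 + y0)) with ((x - x0) + (y - y0)) by ring.
  eapply Rle_lt_trans; [apply Rabs_triang|]. lra.
Qed.

Lemma mult_cont2 x0 y0 : forall eps, 0 < eps -> exists del, 0 < del /\ forall x y,
  Rabs (x - x0) < del -> Rabs (y - y0) < del -> Rabs (x * y - (x0 * y0)) < eps.
Proof.
  intros eps He.
  pose proof (proj1 (filterlim_locally _ _) (filterlim_mult (K:=R_AbsRing) x0 y0) (mkposreal eps He)) as H.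
  destruct H as [P Q [eP HP] [eQ HQ] HPQ].
  exists (Rmin eP eQ); split. apply Rmin_pos; apply cond_pos.
  intros x y Hx Hy. apply (HPQ x y); [apply HP|apply HQ].
  - apply ball_R. eapply Rlt_le_trans; [exact Hx| apply Rmin_l].
  - apply ball_R. eapply Rlt_le_trans; [exact Hy| apply Rmin_r].
Qed.

Lemma ev_cont e a b c d : dm e a b c d -> cont4_at (ev e) a b c d.
Proof.
  induction e; simpl dm; intros Hd.
  - intros eps He; exists eps; split; auto; intros;
    destruct i; simpl; rewrite ?Rminus_eq_0, ?Rabs_R0; auto.
  - intros eps He; exists 1; split; [lra|]; intros; simpl; rewrite Rminus_eq_0, Rabs_R0; auto.
  - destruct Hd. apply (cont4_comp2 Rplus (ev e1) (ev e2)); auto. apply plus_cont2.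
  - destruct Hd. apply (cont4_comp2 Rmult (ev e1) (ev e2)); auto. apply mult_cont2.
  - destruct Hd. apply (cont4_comp1 ln (ev e)); auto. apply continuous_ln; auto.
  - destruct Hd. apply (cont4_comp1 sqrt (ev e)); auto. apply continuous_sqrt.
  - destruct Hd. apply (cont4_comp1 Rinv (ev e)); auto. apply continuous_Rinv; auto.
  - apply (cont4_comp1 cos (ev e)); auto. apply continuous_cos.
  - apply (cont4_comp1 sin (ev e)); auto. apply continuous_sin.
Qed.


Definition open4 (U : set4) : Prop := forall a b c d, U a b c d ->
  exists r, 0 < r /\ forall a' b' c' d', box4 a b c d r a' b' c' d' -> U a' b' c' d'.

Lemma box_center a b c d r : 0 < r -> box4 a b c d r a b c d.
Proof. intros; unfold box4; rewrite !Rminus_eq_0, !Rabs_R0; tauto. Qed.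

Lemma line_local i (f g : fn4) a b c d r : 0 < r ->
  (forall a' b' c' d', box4 a b c d r a' b' c' d' -> f a' b' c' d' = g a' b' c' d') ->
  locally (coord i a b c d) (fun s => line i f a b c d s = line i g a b c d s).
Proof.
  intros Hr H. exists (mkposreal r Hr). intros s Hs. apply ball_R in Hs. simpl in Hs.
  destruct i; simpl in *; apply H; unfold box4; rewrite ?Rminus_eq_0, ?Rabs_R0; tauto.
Qed.

Lemma cont4_ext (f g : fn4) a b c d r : 0 < r ->
  (forall a' b' c' d', box4 a b c d r a' b' c' d' -> f a' b' c' d' = g a' b' c' d') ->
  cont4_at g a b c d -> cont4_at f a b c d.
Proof.
  intros Hr H Hg eps He. destruct (Hg eps He) as [del [Hd H2]].
  exists (Rmin del r); split. apply Rmin_pos; auto.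
  intros a' b' c' d' h1 h2 h3 h4.
  assert (L : forall x, Rabs x < Rmin del r -> Rabs x < del /\ Rabs x < r).
  { intros x Hx; split; eapply Rlt_le_trans; eauto; first [apply Rmin_l|apply Rmin_r]. }
  apply L in h1; apply L in h2; apply L in h3; apply L in h4.
  rewrite (H a' b' c' d'), (H a b c d). apply H2; tauto.
  apply box_center; auto. unfold box4; tauto.
Qed.

Lemma pd_ev (U : set4) (f : fn4) e i a b c d : open4 U ->
  (forall a b c d, U a b c d -> dm e a b c d) ->
  (forall a b c d, U a b c d -> f a b c d = ev e a b c d) ->
  U a b c d -> pd i f a b c d = ev (dv i e) a b c d.
Proof.
  intros Ho Hd Hf HU. destruct (Ho a b c d HU) as [r [Hr Hb]].
  rewrite pd_line. rewrite (Derive_ext_loc _ (line i (ev e) a b c d)).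
  apply is_derive_unique. apply ev_is_derive; auto.
  apply (line_local i f (ev e) a b c d r); auto.
Qed.

Theorem smooth_ev (U : set4) (f : fn4) e : open4 U ->
  (forall a b c d, U a b c d -> dm e a b c d) ->
  (forall a b c d, U a b c d -> f a b c d = ev e a b c d) ->
  smooth_on U f.
Proof.
  intros Ho Hd Hf.
  assert (K : forall l, exists e', (forall a b c d, U a b c d -> dm e' a b c d) /\
     (forall a b c d, U a b c d -> iter_pd l f a b c d = ev e' a b c d)).
  { induction l as [|i l IH].
    - exists e; auto.
    - destruct IH as [e' [H1 H2]]. exists (dv i e'). split.
      + intros; apply dm_dv; auto.
      + intros a b c d HU. simpl. apply (pd_ev U); auto. }
  intros l a b c d HU. destruct (K l) as [e' [H1 H2]].
  destruct (Ho a b c d HU) as [r [Hr Hb]].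
  split.
  - apply (cont4_ext _ (ev e') a b c d r); auto. apply ev_cont; auto.
  - intros i. rewrite ex_pd_line.
    apply (ex_derive_ext_loc (line i (ev e') a b c d)).
    apply (line_local i (ev e') (iter_pd l f) a b c d r); auto.
    intros; symmetry; auto.
    eexists. apply ev_is_derive; auto.
Qed.

Lemma smooth_mono (U W : set4) f : smooth_on U f ->
  (forall a b c d, W a b c d -> U a b c d) -> smooth_on W f.
Proof. intros H HW l a b c d Hw. apply H; auto. Qed.

Lemma open4_pos (Q : ex) (U : set4) : (forall a b c d, dm Q a b c d) ->
  (forall a b c d, U a b c d <-> 0 < ev Q a b c d) -> open4 U.
Proof.
  intros HQ HU a b c d Ha. apply HU in Ha.
  destruct (ev_cont Q a b c d (HQ a b c d) _ Ha) as [del [Hd H]].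
  exists del; split; auto. intros a' b' c' d' [h1 [h2 [h3 h4]]].
  apply HU. specialize (H a' b' c' d' h1 h2 h3 h4).
  apply Rabs_def2 in H. lra.
Qed.

Lemma open4_True : open4 (fun _ _ _ _ => True).
Proof. intros; exists 1; split; auto; lra. Qed.

Lemma cont_is_lim (f : fn4) i a b c d : cont4_at f a b c d ->
  is_lim (line i f a b c d) (coord i a b c d) (f a b c d).
Proof.
  intros H. apply is_lim_spec. intros eps.
  destruct (H eps (cond_pos eps)) as [del [Hd H2]].
  exists (mkposreal del Hd). intros y Hy _. apply ball_R in Hy. simpl in Hy.
  destruct i; simpl in *; apply H2; rewrite ?Rminus_eq_0, ?Rabs_R0; auto.
Qed.


Definition Qe := Add (C 1) (Add (Mul (C (-1)) (Mul (V d1) (V d1))) (Mul (C (-1)) (Mul (V d2) (V d2)))).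
Definition eL rho1 rho2 := Add (Mul (C rho1) (Ln (Sq Qe))) (Mul (C (rho2/2)) (Add (Mul (V d3) (V d3)) (Mul (V d4) (V d4)))).
Definition eHh := Mul (C (/2)) (Add (Mul (V d1) (V d3)) (Mul (V d2) (V d4))).
Definition Te := Add (C 1) (Mul (C (-1)) (Mul (V d2) (V d2))).
Definition eHc := Mul (C (/2)) (Add (Mul (Mul (Sq Te) (Cs (V d1))) (V d3)) (Mul (Mul (Sq Te) (Sn (V d1))) (V d4))).
Definition eP rho2 := Mul (C (rho2/2)) (Add (Mul (V d3) (V d3)) (Mul (V d4) (V d4))).

Lemma Qe_ev a b u v : ev Qe a b u v = 1 - a ^ 2 - b ^ 2.
Proof. simpl; ring. Qed.
Lemma Te_ev a b u v : ev Te a b u v = 1 - b ^ 2.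
Proof. simpl; ring. Qed.

Lemma hemi_open : open4 hemi_dom.
Proof.
  apply (open4_pos Qe). intros; simpl; auto.
  intros; rewrite Qe_ev; unfold hemi_dom; split; intro; lra.
Qed.

Lemma cyl_iff th t u v : cyl_dom th t u v <-> 0 < 1 - t ^ 2.
Proof.
  unfold cyl_dom. split; intro H.
  - unfold Rabs in H; destruct (Rcase_abs t); nra.
  - apply Rabs_def1; nra.
Qed.

Lemma cyl_open : open4 cyl_dom.
Proof.
  apply (open4_pos Te). intros; simpl; auto.
  intros; rewrite Te_ev; apply cyl_iff.
Qed.

Lemma sq_pos x : 0 < x -> 0 < sqrt x. Proof. apply sqrt_lt_R0. Qed.

Lemma hemiL_dm rho1 rho2 a b u v : hemi_dom a b u v -> dm (eL rho1 rho2) a b u v.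
Proof.
  unfold hemi_dom; intros H. assert (H' : 0 < ev Qe a b u v) by (rewrite Qe_ev; lra).
  simpl in H' |- *. repeat split; auto. apply sq_pos; auto.
Qed.

Lemma hemiL_eq rho1 rho2 s a b u v : (s = 1 \/ s = -1) -> hemi_dom a b u v ->
  hemi s (Lso rho1 rho2) a b u v = ev (eL rho1 rho2) a b u v.
Proof.
  intros Hs H. unfold hemi, Lso, eL, Qe. cbn [ev].
  replace (1 + (-1 * (a * a) + -1 * (b * b))) with (1 - a ^ 2 - b ^ 2) by ring.
  rewrite Rabs_mult, (Rabs_pos_eq (sqrt _)) by apply sqrt_pos.
  replace (Rabs s) with 1 by (destruct Hs as [-> | ->]; unfold Rabs; destruct Rcase_abs; lra).
  rewrite Rmult_1_l. ring.
Qed.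


Ltac hemi_alg H a b :=
  unfold hemi_dom in H;
  let HQ := fresh in
  assert (HQ : 0 < 1 + (-1 * (a * a) + -1 * (b * b))) by nra;
  let HS := fresh in
  pose proof (sqrt_sqrt _ (Rlt_le _ _ HQ)) as HS;
  let HP := fresh in pose proof (sq_pos _ HQ) as HP;
  set (S := sqrt (1 + (-1 * (a * a) + -1 * (b * b)))) in *;
  try replace (1 - a * a - b * b) with (S * S) by (rewrite HS; ring);
  field; lra.

Lemma hemiH_eq s a b u v : hemi s Hso a b u v = ev eHh a b u v.
Proof. unfold hemi, Hso, eHh; cbn [ev]. ring. Qed.

Ltac hcompL rho1 rho2 :=
  intros Hs H; unfold hcomp;
  rewrite (pd_ev hemi_dom _ (eL rho1 rho2)); auto using hemi_open, hemiL_dm;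
  [simpl; match goal with |- context [sqrt (1 + (-1 * (?a * ?a) + -1 * (?b * ?b)))] => hemi_alg H a b end | intros; apply hemiL_eq; auto].
Ltac hcompH :=
  intros H; unfold hcomp;
  rewrite (pd_ev (fun _ _ _ _ => True) _ eHh); auto using open4_True;
  [simpl; field | intros; simpl; tauto].

Lemma hL1 rho1 rho2 s a b u v : (s = 1 \/ s = -1) -> hemi_dom a b u v ->
  hcomp (hemi s (Lso rho1 rho2)) a b u v d1 = - rho1 * a / (1 - a * a - b * b).
Proof. hcompL rho1 rho2. Qed.
Lemma hL2 rho1 rho2 s a b u v : (s = 1 \/ s = -1) -> hemi_dom a b u v ->
  hcomp (hemi s (Lso rho1 rho2)) a b u v d2 = - rho1 * b / (1 - a * a - b * b).
Proof. hcompL rho1 rho2. Qed.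
Lemma hL3 rho1 rho2 s a b u v : (s = 1 \/ s = -1) -> hemi_dom a b u v ->
  hcomp (hemi s (Lso rho1 rho2)) a b u v d3 = rho2 * u.
Proof. hcompL rho1 rho2. Qed.
Lemma hL4 rho1 rho2 s a b u v : (s = 1 \/ s = -1) -> hemi_dom a b u v ->
  hcomp (hemi s (Lso rho1 rho2)) a b u v d4 = rho2 * v.
Proof. hcompL rho1 rho2. Qed.
Lemma hH1 s a b u v : True -> hcomp (hemi s Hso) a b u v d1 = u / 2.
Proof. hcompH. Qed.
Lemma hH2 s a b u v : True -> hcomp (hemi s Hso) a b u v d2 = v / 2.
Proof. hcompH. Qed.
Lemma hH3 s a b u v : True -> hcomp (hemi s Hso) a b u v d3 = a / 2.
Proof. hcompH. Qed.
Lemma hH4 s a b u v : True -> hcomp (hemi s Hso) a b u v d4 = b / 2.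
Proof. hcompH. Qed.

Lemma is_derive_lnabs s : s <> 0 -> is_derive (fun r => ln (Rabs r)) s (/ s).
Proof.
  intros Hs. destruct (Rlt_or_le 0 s) as [Hp|Hn].
  - apply (is_derive_ext_loc ln). exists (mkposreal s Hp). intros y Hy.
    apply ball_R in Hy; simpl in Hy. apply Rabs_def2 in Hy.
    change (minus y s) with (y - s) in Hy. rewrite Rabs_pos_eq; [reflexivity| lra].
    apply is_derive_ln; auto.
  - assert (Hn' : 0 < - s) by lra.
    apply (is_derive_ext_loc (fun r => ln (- r))). exists (mkposreal (-s) Hn'). intros y Hy.
    apply ball_R in Hy; simpl in Hy. apply Rabs_def2 in Hy.
    change (minus y s) with (y - s) in Hy. rewrite Rabs_left; [reflexivity| lra].
    eapply is_derive_eq.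
    apply (is_derive_comp (K:=R_AbsRing) (V:=R_NormedModule) ln (fun r => - r)).
    apply is_derive_ln; auto.
    apply (is_derive_opp (K:=R_AbsRing) (V:=R_NormedModule) (fun r => r)). apply (is_derive_id (K:=R_AbsRing)).
    rewrite scalR. unfold opp, one; simpl. field. lra.
Qed.

Lemma cL1 rho1 rho2 th t u v : ccomp (cyl (Lso rho1 rho2)) th t u v d1 = 0.
Proof. unfold ccomp, pd, cyl, Lso. apply Derive_const. Qed.
Lemma cL3 rho1 rho2 th t u v : ccomp (cyl (Lso rho1 rho2)) th t u v d3 = rho2 * u.
Proof. unfold ccomp, pd, cyl, Lso. apply is_derive_unique. auto_derive; auto. field. Qed.
Lemma cL4 rho1 rho2 th t u v : ccomp (cyl (Lso rho1 rho2)) th t u v d4 = rho2 * v.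
Proof. unfold ccomp, pd, cyl, Lso. apply is_derive_unique. auto_derive; auto. field. Qed.
Lemma cL2 rho1 rho2 th t u v : ccomp (cyl (Lso rho1 rho2)) th t u v d2 = rho1.
Proof.
  unfold ccomp, bpd_z. rewrite (is_lim_unique _ _ rho1). reflexivity.
  apply (is_lim_ext_loc (fun _ => rho1)); [|apply is_lim_const].
  assert (K : forall y, y <> 0 -> rho1 = y * Derive (fun r => cyl (Lso rho1 rho2) th r u v) y).
  { intros y Hy. rewrite (is_derive_unique _ _ (rho1 * / y)). field; auto.
    unfold cyl, Lso. eapply is_derive_eq.
    apply (is_derive_plus (K:=R_AbsRing) (V:=R_NormedModule) (fun r => rho1 * ln (Rabs r)) (fun _ => rho2 / 2 * (u ^ 2 + v ^ 2))).
    apply (is_derive_scal (fun r => ln (Rabs r))). apply is_derive_lnabs; auto.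
    apply (is_derive_const (K:=R_AbsRing) (V:=R_NormedModule)).
    exact (Rplus_0_r _). }
  simpl. unfold locally', within. destruct (Req_dec t 0) as [Ht|Ht].
  - exists (mkposreal 1 Rlt_0_1). intros y _ Hy. apply K. congruence.
  - assert (Ht' : 0 < Rabs t) by (apply Rabs_pos_lt; auto).
    exists (mkposreal _ Ht'). intros y Hy _. apply K. apply ball_R in Hy.
    intro E; subst y. change (Rabs (0 - t) < Rabs t) in Hy. replace (0 - t) with (-t) in Hy by ring. rewrite Rabs_Ropp in Hy. lra.

Qed.

Lemma cylH_eq th t u v : cyl Hso th t u v = ev eHc th t u v.
Proof.
  unfold cyl, Hso, eHc, Te; cbn [ev].
  replace (1 + -1 * (t * t)) with (1 - t ^ 2) by ring. ring.
Qed.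

Lemma cyl_pos th t u v : cyl_dom th t u v -> 0 < 1 - t * t.
Proof. intros H; apply cyl_iff in H; lra. Qed.

Lemma cylH_dm th t u v : cyl_dom th t u v -> dm eHc th t u v.
Proof.
  intros H. apply cyl_pos in H. unfold eHc, Te; simpl.
  replace (1 + -1 * (t * t)) with (1 - t * t) by ring. tauto.
Qed.

Ltac cyl_alg H t :=
  replace (1 + -1 * (t * t)) with (1 - t * t) by ring;
  let HP := fresh in pose proof (sq_pos _ (cyl_pos _ _ _ _ H)) as HP;
  field; lra.

Ltac ccompH :=
  intros H; unfold ccomp;
  rewrite (pd_ev cyl_dom _ eHc); auto using cyl_open, cylH_dm;
  [simpl; match goal with |- context [sqrt (1 + -1 * (?t * ?t))] => cyl_alg H t end
  | intros; apply cylH_eq].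

Lemma cH1 th t u v : cyl_dom th t u v ->
  ccomp (cyl Hso) th t u v d1 = sqrt (1 - t * t) * (- sin th * u + cos th * v) / 2.
Proof. ccompH. Qed.
Lemma cH3 th t u v : cyl_dom th t u v ->
  ccomp (cyl Hso) th t u v d3 = sqrt (1 - t * t) * cos th / 2.
Proof. ccompH. Qed.
Lemma cH4 th t u v : cyl_dom th t u v ->
  ccomp (cyl Hso) th t u v d4 = sqrt (1 - t * t) * sin th / 2.
Proof. ccompH. Qed.

Lemma cH2 th t u v : cyl_dom th t u v ->
  ccomp (cyl Hso) th t u v d2 = - (t * t) * (cos th * u + sin th * v) / (2 * sqrt (1 - t * t)).
Proof.
  intros H. unfold ccomp, bpd_z.
  set (E := Mul (V d2) (dv d2 eHc)).
  assert (HE : dm E th t u v) by (unfold E; change (True /\ dm (dv d2 eHc) th t u v); split; [exact I| apply dm_dv, cylH_dm; auto]).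
  rewrite (is_lim_unique _ _ (ev E th t u v)).
  - unfold E. simpl. cyl_alg H t.
  - apply (is_lim_ext_loc (line d2 (ev E) th t u v)).
    + destruct (cyl_open th t u v H) as [r [Hr Hb]].
      exists (mkposreal r Hr). intros y Hy _. change (Rabs (y - t) < r) in Hy.
      assert (Hy' : cyl_dom th y u v).
      { apply Hb. unfold box4. rewrite !Rminus_eq_0, !Rabs_R0. tauto. }
      simpl. unfold E. cbn [ev].
      change (Derive (fun r0 => cyl Hso th r0 u v) y) with (pd d2 (cyl Hso) th y u v).
      rewrite (pd_ev cyl_dom _ eHc); auto using cyl_open, cylH_dm.
      intros; apply cylH_eq.
    + apply (cont_is_lim (ev E) d2 th t u v). apply ev_cont; auto.
Qed.


Lemma null4_pt (S : set4) : (forall a b c d, S a b c d -> a = 0 /\ b = 0 /\ c = 0 /\ d = 0) -> null4 S.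
Proof.
  intros HS eps He. exists (fun _ => 0), (fun _ => 0), (fun _ => 0), (fun _ => 0),
    (fun _ => 0), (fun _ => 0), (fun _ => 0), (fun _ => 0).
  split; [intros; lra|]. split.
  - intros N. rewrite sum_eq_R0; [lra|]. intros; ring.
  - intros a b c d H. apply HS in H. exists 0%nat. lra.
Qed.

Lemma null3_empty (S : set3) : (forall a b c, ~ S a b c) -> null3 S.
Proof.
  intros HS eps He. exists (fun _ => 0), (fun _ => 0), (fun _ => 0), (fun _ => 0),
    (fun _ => 0), (fun _ => 0).
  split; [intros; lra|]. split.
  - intros N. rewrite sum_eq_R0; [lra|]. intros; ring.
  - intros a b c H. exfalso; eapply HS; eauto.
Qed.

Lemma is_bfun_L rho1 rho2 : is_bfun (Lso rho1 rho2).
Proof.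
  split.
  - intros s Hs. apply (smooth_ev hemi_dom _ (eL rho1 rho2)); auto using hemi_open.
    intros; apply hemiL_dm; auto. intros; apply hemiL_eq; auto.
  - intros th t u v _. exists 1; split; [lra|]. exists rho1, (ev (eP rho2)). split.
    + apply (smooth_mono (fun _ _ _ _ => True)); auto.
      apply (smooth_ev _ _ (eP rho2)); auto using open4_True.
      intros; simpl; tauto.
    + intros. unfold cyl, Lso, eP. cbn [ev]. ring.
Qed.

Lemma is_bfun_H : is_bfun Hso.
Proof.
  split.
  - intros s Hs. apply (smooth_mono (fun _ _ _ _ => True)); auto.
    apply (smooth_ev _ _ eHh); auto using open4_True.
    all: try (intros; simpl; tauto); try (intros; apply hemiH_eq).
  - intros th t u v _. exists 1; split; [lra|]. exists 0, (cyl Hso). split.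
    + apply (smooth_mono cyl_dom); [|intros; tauto].
      apply (smooth_ev _ _ eHc); auto using cyl_open, cylH_dm.
      intros; apply cylH_eq.
    + intros. ring.
Qed.

Theorem lemma4p2 (rho1 rho2 : R) (h1 : 0 < rho1) (h2 : 0 < rho2) :
  b_integrable rho1 rho2 (Lso rho1 rho2) Hso.
Proof.
  split; [apply is_bfun_L|]. split; [apply is_bfun_H|].
  split; [|split; [|split; [|split]]].
  - intros s Hs a b u v H. unfold br.
    rewrite (hL1 rho1 rho2 s), (hL2 rho1 rho2 s), (hL3 rho1 rho2 s), (hL4 rho1 rho2 s),
      !hH1, !hH2, !hH3, !hH4; auto.
    unfold omega_hem. unfold hemi_dom in H.
    replace (1 - a ^ 2 - b ^ 2) with (1 - a * a - b * b) by ring.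
    field. repeat split; lra.
  - intros th t u v H. unfold br.
    rewrite cL1, cL2, cL3, cL4, cH1, cH2, cH3, cH4; auto.
    unfold omega_cyl. pose proof (sq_pos _ (cyl_pos _ _ _ _ H)).
    field. repeat split; lra.
  - intros s Hs. apply null4_pt. intros a b u v [H W].
    pose proof (W d1 d3) as W13. pose proof (W d2 d4) as W24.
    rewrite (hL1 rho1 rho2 s), (hL3 rho1 rho2 s), hH1, hH3 in W13; auto.
    rewrite (hL2 rho1 rho2 s), (hL4 rho1 rho2 s), hH2, hH4 in W24; auto.
    unfold hemi_dom in H. set (q := 1 - a * a - b * b) in *.
    assert (Hq : 0 < q) by (unfold q; lra).
    assert (E1 : rho1 * (a * a) + rho2 * (u * u) * q
       = -2 * q * (- rho1 * a / q * (a / 2) - rho2 * u * (u / 2))) by (field; lra).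
    assert (E2 : rho1 * (b * b) + rho2 * (v * v) * q
       = -2 * q * (- rho1 * b / q * (b / 2) - rho2 * v * (v / 2))) by (field; lra).
    rewrite W13 in E1. rewrite W24 in E2.
    rewrite Rmult_0_r in E1, E2.
    assert (P1 : 0 <= rho1 * (a * a)) by (apply Rmult_le_pos; nra).
    assert (P2 : 0 <= rho2 * (u * u) * q) by (apply Rmult_le_pos; [apply Rmult_le_pos|]; nra).
    assert (P3 : 0 <= rho1 * (b * b)) by (apply Rmult_le_pos; nra).
    assert (P4 : 0 <= rho2 * (v * v) * q) by (apply Rmult_le_pos; [apply Rmult_le_pos|]; nra).
    assert (Z1 : rho1 * (a * a) = 0) by lra. assert (Z2 : rho2 * (u * u) * q = 0) by lra.
    assert (Z3 : rho1 * (b * b) = 0) by lra. assert (Z4 : rho2 * (v * v) * q = 0) by lra.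
    apply Rmult_integral in Z1; apply Rmult_integral in Z2; apply Rmult_integral in Z3; apply Rmult_integral in Z4.
    destruct Z1 as [Z1|Z1]; [lra|]. destruct Z3 as [Z3|Z3]; [lra|].
    destruct Z2 as [Z2|Z2]; [|lra]. destruct Z4 as [Z4|Z4]; [|lra].
    apply Rmult_integral in Z2; destruct Z2 as [Z2|Z2]; [lra|].
    apply Rmult_integral in Z4; destruct Z4 as [Z4|Z4]; [lra|].
    apply Rmult_integral in Z1; apply Rmult_integral in Z2;
    apply Rmult_integral in Z3; apply Rmult_integral in Z4. tauto.
  - apply null4_pt. intros th t u v [H W]. exfalso.
    pose proof (W d2 d3) as W3. pose proof (W d2 d4) as W4.
    rewrite cL2, cL3, cH2, cH3 in W3; auto.
    rewrite cL2, cL4, cH2, cH4 in W4; auto.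
    pose proof (sq_pos _ (cyl_pos _ _ _ _ H)) as HS.
    set (S := sqrt (1 - t * t)) in *.
    pose proof (sin2_cos2 th) as SC. unfold Rsqr in SC.
    set (w := cos th * u + sin th * v).
    assert (E : rho1 * S * S + rho2 * (t * t) * (w * w) =
      2 * S * (cos th * (rho1 * (S * cos th / 2) - rho2 * u * (- (t * t) * w / (2 * S)))
             + sin th * (rho1 * (S * sin th / 2) - rho2 * v * (- (t * t) * w / (2 * S))))
      + rho1 * S * S * (1 - (sin th * sin th + cos th * cos th))).
    { unfold w. field. lra. }
    unfold w in E. rewrite W3, W4, SC in E.
    assert (0 < rho1 * S * S) by (repeat apply Rmult_lt_0_compat; auto).
    assert (0 <= rho2 * (t * t) * ((cos th * u + sin th * v) * (cos th * u + sin th * v)))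
      by (apply Rmult_le_pos; [apply Rmult_le_pos; [lra| apply Rle_0_sqr] | apply Rle_0_sqr]).
    lra.
  - apply null3_empty. intros th u v W.
    assert (H : cyl_dom th 0 u v) by (unfold cyl_dom; rewrite Rabs_R0; lra).
    pose proof (W d2 d3) as W3. pose proof (W d2 d4) as W4.
    rewrite cL2, cL3, cH2, cH3 in W3; auto.
    rewrite cL2, cL4, cH2, cH4 in W4; auto.
    replace (1 - 0 * 0) with 1 in W3, W4 by ring. rewrite sqrt_1 in W3, W4.
    pose proof (sin2_cos2 th) as SC. unfold Rsqr in SC.
    assert (cos th = 0) by (field_simplify in W3; nra).
    assert (sin th = 0) by (field_simplify in W4; nra).
    nra.
Qed.
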